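(* Let $G=(V,E)$ be a finite connected simple graph on $N\ge2$ vertices with adjacency matrix $A$, whose largest eigenvalue is $\phi_0$; let $W\subseteq V$ be a nonempty set of marked vertices, and for $\gamma>0$ let $H(\gamma)=-\gamma A-\sum_{w\in W}|w\rangle\langle w|$ on $\mathbb{C}^V$. Fix an index $j\in\{2,\dots,N\}$, and for $\gamma>0$ let $\lambda^-(\gamma)$ be the smallest eigenvalue of $H(\gamma)$ and $\lambda^+(\gamma)$ its $j$-th smallest eigenvalue counted with multiplicity (so $\lambda^+(\gamma)>\lambda^-(\gamma)$). Then there exists $\gamma>0$ such that $$-\gamma\phi_0=\frac{\lambda^-(\gamma)+\lambda^+(\gamma)}{2}.$$
   Context: $\{|v\rangle: v\in V\}$ is the computational basis of $\mathbb{C}^V$. *)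

(* Defs.v *)
From HB Require Import structures.
From mathcomp Require Import all_boot all_order all_algebra.
From mathcomp Require Import reals.
Set Implicit Arguments. Unset Strict Implicit. Unset Printing Implicit Defensive.
Import Order.TTheory GRing.Theory Num.Theory.
Local Open Scope ring_scope.

Definition simple_graph N (adj : rel 'I_N) : Prop :=
  symmetric adj /\ irreflexive adj.

Definition connected_graph N (adj : rel 'I_N) : Prop :=
  forall x y : 'I_N, connect adj x y.

Definition adjmx (R : nzRingType) N (adj : rel 'I_N) : 'M[R]_N :=
  \matrix_(i, k) (adj i k)%:R.

Definition Hmx (R : nzRingType) N (adj : rel 'I_N) (W : {set 'I_N}) (g : R)
  : 'M[R]_N :=
  - (g *: adjmx R adj) - \sum_(w in W) delta_mx w w.

(* s is the list of eigenvalues of M, counted with multiplicity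
   (roots of the characteristic polynomial), sorted in nondecreasing order;
   s`_k is then the (k+1)-th smallest eigenvalue *)
Definition sorted_spectrum (R : realType) N (M : 'M[R]_N) (s : seq R) : Prop :=
  sorted <=%R s /\ char_poly M = \prod_(x <- s) ('X - x%:P).

Definition largest_eigenvalue (R : realType) N (M : 'M[R]_N) (phi : R) : Prop :=
  eigenvalue M phi /\ (forall mu : R, eigenvalue M mu -> mu <= phi).

(* Main.v *)
Require Import Defs.
From HB Require Import structures.
From mathcomp Require Import all_boot all_order all_algebra.
From mathcomp Require Import reals.
Import Order.TTheory GRing.Theory Num.Theory.
Local Open Scope ring_scope.

From mathcomp Require Import sesquilinear spectral mxred.
From mathcomp Require Import complex.
From mathcomp Require Import ring lra zify.
From mathcomp Require classical_sets topology normedtype.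

Module Ana.
Import classical_sets topology normedtype.
Import Order.TTheory GRing.Theory Num.Theory Num.Def.
Local Open Scope ring_scope.
Import numFieldNormedType.Exports.
Local Set Implicit Arguments. Local Unset Strict Implicit.

Lemma lip_cont (R : realType) (f : R -> R) (L : R) : 0 <= L ->
  (forall x y, `|f x - f y| <= L * `|x - y|) -> continuous f.
Proof.
move=> L0 Hf x; apply/cvgrPdist_lt => e e0.
have L1 : 0 < L + 1 by lra.
have ed : 0 < e / (L + 1) by rewrite divr_gt0.
near=> y.
apply: (le_lt_trans (Hf x y)).
have : `|x - y| < e / (L + 1).
  near: y; apply: cvgr_dist_lt => //; exact: cvg_id.
rewrite ltr_pdivlMr // => h.
have := normr_ge0 (x - y); nra.
Unshelve. all: by end_near.
Qed.

Lemma ivt_use (R : realType) (f : R -> R) a b : a <= b -> continuous f ->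
  f a <= 0 -> 0 <= f b -> exists2 c, c \in `[a, b] & f c = 0.
Proof.
move=> ab fc fa fb; apply: IVT => //.
  exact: continuous_subspaceT.
by rewrite ge_min fa /= le_max fb orbT.
Qed.

Lemma ivt_lip (R : realType) (f : R -> R) (L a b : R) : 0 <= L ->
  (forall x y, `|f x - f y| <= L * `|x - y|) -> a <= b ->
  f a <= 0 -> 0 <= f b -> exists c, a <= c <= b /\ f c = 0.
Proof.
move=> L0 Hf ab fa fb.
have [c cab fc0] := ivt_use ab (lip_cont L0 Hf) fa fb.
by exists c; split => //; move: cab; rewrite in_itv.
Qed.

End Ana.

Module Dev.
Import Order.TTheory GRing.Theory Num.Theory Num.Def.
Local Set Implicit Arguments. Local Unset Strict Implicit. Local Unset Printing Implicit Defensive.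
Local Open Scope ring_scope.

Section S.
Variable R : realType.
Local Notation C := (R[i]).
Local Notation toC := (real_complex R).
Local Notation Re := (@complex.Re R).
Local Open Scope sesquilinear_scope.

Definition nrm (z : C) : R := Re (z * conjC z).
Lemma nrmE (a b : R) : nrm (Complex a b) = a ^+ 2 + b ^+ 2.
Proof. by rewrite /nrm /= mulrN opprK !expr2. Qed.
Lemma nrm_ge0 z : 0 <= nrm z.
Proof. by case: z => a b; rewrite nrmE addr_ge0 ?sqr_ge0. Qed.
Lemma nrm_eq0 z : (nrm z == 0) = (z == 0).
Proof.
case: z => a b; rewrite nrmE paddr_eq0 ?sqr_ge0 // !sqrf_eq0.
by rewrite eq_complex.
Qed.

Definition nrm2 n (x : 'rV[C]_n) : R := \sum_i nrm (x 0 i).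
Definition qf n (A : 'M[C]_n) (x : 'rV[C]_n) : R := Re ((x *m A *m x ^t*) 0 0).

Lemma nrm2E n (x : 'rV[C]_n) : nrm2 x = Re ((x *m x ^t*) 0 0).
Proof.
rewrite /nrm2 mxE (@raddf_sum _ _ Re); apply: eq_bigr => i _.
by rewrite !mxE.
Qed.

Definition diagz n (A : 'M[C]_n) (P : 'M[C]_n) (d : 'rV[R]_n) :=
  P \is unitarymx /\ A = P ^t* *m diag_mx (map_mx toC d) *m P.

Lemma unitary_tl n (P : 'M[C]_n) : P \is unitarymx -> P ^t* *m P = 1%:M.
Proof.
move=> Pu; rewrite -(invmx_unitary Pu) mulVmx //; exact: unitarymx_unit.
Qed.

Lemma qf_diag_raw n (z : 'rV[C]_n) (d : 'rV[R]_n) :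
  qf (diag_mx (map_mx toC d)) z = \sum_i d 0 i * nrm (z 0 i).
Proof.
rewrite /qf !mxE (@raddf_sum _ _ Re); apply: eq_bigr => i _.
rewrite !mxE (bigD1 i) //= big1 ?addr0; last first.
  by move=> k /negbTE ki; rewrite !mxE ki mulr0n mulr0.
rewrite !mxE eqxx mulr1n /nrm.
case: (z 0 i) => a b /=; ring.
Qed.

Lemma ctM m n p (A : 'M[C]_(m, n)) (B : 'M[C]_(n, p)) : (A *m B) ^t* = B ^t* *m A ^t*.
Proof. by rewrite trmx_mul map_mxM. Qed.

Lemma qf_diagz n (A P : 'M[C]_n) d x : diagz A P d ->
  qf A x = \sum_i d 0 i * nrm ((x *m P ^t*) 0 i).
Proof.
move=> [Pu ->]; rewrite -qf_diag_raw /qf; congr (Re (_ 0 0)).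
by rewrite ctM trmxCK !mulmxA.
Qed.

Lemma nrm2_unitary n (P : 'M[C]_n) x : P \is unitarymx -> nrm2 (x *m P ^t*) = nrm2 x.
Proof.
move=> Pu; rewrite !nrm2E ctM trmxCK; congr (Re (_ 0 0)).
by rewrite -!mulmxA (mulmxA (P ^t*)) unitary_tl // mul1mx.
Qed.

Definition toCmx m n (M : 'M[R]_(m, n)) : 'M[C]_(m, n) := map_mx toC M.

Definition specP0 n (M : 'M[R]_n) := spectralmx (toCmx M).
Definition specd0 n (M : 'M[R]_n) : 'rV[R]_n := map_mx Re (spectral_diag (toCmx M)).

Lemma diagz_spec0 n (M : 'M[R]_n) : M^T = M -> diagz (toCmx M) (specP0 M) (specd0 M).
Proof.
move=> Msym.
have Mh : toCmx M \is hermsymmx.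
  apply: realsym_hermsym.
    by apply/is_hermitianmxP; rewrite expr0 scale1r map_mx_id // /toCmx map_trmx Msym.
  by apply/mxOverP => i j; rewrite mxE; apply/complex_realP; eexists.
have /orthomx_spectralP E := hermitian_normalmx Mh.
have Pu : specP0 M \is unitarymx by exact: spectral_unitarymx.
have Hr := hermitian_spectral_diag_real Mh.
rewrite /diagz /specd0; rewrite -/(specP0 M) in E *.
move: (specP0 M) (spectral_diag (toCmx M)) Pu E Hr => P sd Pu E Hr.
rewrite (invmx_unitary Pu) in E.
have -> : map_mx toC (map_mx Re sd) = sd.
  apply/matrixP => i j; rewrite !mxE.
  by have /mxOverP /(_ i j) /RRe_real := Hr.
by [].
Qed.

Lemma spec_ex n (M : 'M[R]_n) :
  {pd : 'M[C]_n * 'rV[R]_n | M^T = M -> diagz (toCmx M) pd.1 pd.2}.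
Proof. by exists (specP0 M, specd0 M); exact: diagz_spec0. Qed.
Definition specP n (M : 'M[R]_n) := (sval (spec_ex M)).1.
Definition specd n (M : 'M[R]_n) := (sval (spec_ex M)).2.
Lemma diagz_spec n (M : 'M[R]_n) : M^T = M -> diagz (toCmx M) (specP M) (specd M).
Proof. exact: (svalP (spec_ex M)). Qed.
End S.

Section S.
Variable R : realType.
Local Notation C := (R[i]).
Local Notation toC := (real_complex R).
Local Notation Re := (@complex.Re R).
Local Open Scope sesquilinear_scope.

Lemma char_poly_sim n (Q D P : 'M[C]_n) : Q *m P = 1%:M ->
  char_poly (Q *m D *m P) = char_poly D.
Proof.
move=> QP.
have E : char_poly_mx (Q *m D *m P) =
   map_mx polyC Q *m char_poly_mx D *m map_mx polyC P.
  rewrite /char_poly_mx !map_mxM mulmxBr mulmxBl; congr (_ - _).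
  by rewrite mul_mx_scalar -scalemxAl -map_mxM QP map_mx1 scalemx1.
rewrite /char_poly E !det_mulmx mulrAC -det_mulmx -map_mxM QP.
by rewrite map_mx1 det1 mul1r.
Qed.

Lemma char_poly_diagz n (M : 'M[R]_n) P d : diagz (toCmx M) P d ->
  char_poly M = \prod_(i < n) ('X - (d 0 i)%:P).
Proof.
move=> [Pu E]; apply: (@map_poly_inj _ _ toC).
rewrite map_char_poly -/(toCmx M) E char_poly_sim ?unitary_tl //.
rewrite char_poly_trig ?diag_mx_is_trig // rmorph_prod.
by apply: eq_bigr => i _; rewrite !mxE eqxx mulr1n rmorphB /= map_polyX map_polyC.
Qed.

Definition svals n (d : 'rV[R]_n) : seq R := sort <=%R [seq d 0 i | i <- enum 'I_n].

Lemma size_svals n (d : 'rV[R]_n) : size (svals d) = n.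
Proof. by rewrite size_sort size_map size_enum_ord. Qed.

Lemma sorted_svals n (d : 'rV[R]_n) : sorted <=%R (svals d).
Proof. by apply: sort_sorted; exact: le_total. Qed.

Lemma prod_svals n (d : 'rV[R]_n) :
  \prod_(x <- svals d) ('X - x%:P) = \prod_(i < n) ('X - (d 0 i)%:P).
Proof.
rewrite /svals (perm_big _ (permEl (perm_sort _ _))) big_map.
by rewrite big_enum.
Qed.

Lemma count_svals n (d : 'rV[R]_n) (p : pred R) :
  count p (svals d) = #|[set i | p (d 0 i)]|.
Proof.
rewrite /svals (permP (permEl (perm_sort _ _))) count_map cardsE cardE /enum_mem size_filter.
by rewrite (@eq_filter _ _ predT) ?filter_predT.

Qed.
End S.

Section S.
Variable R : realType.

Lemma count_nth_ge (s : seq R) k : sorted <=%R s -> (k < size s)%N ->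
  (k.+1 <= count (fun x : R => (x <= s`_k)%R) s)%N.
Proof.
move=> ss ks; set t := s`_k; rewrite -(cat_take_drop k.+1 s) count_cat.
apply: leq_trans (leq_addr _ _).
have := all_count (fun x : R => (x <= s`_k)%R) (take k.+1 s).
have -> : all (fun x : R => (x <= s`_k)%R) (take k.+1 s).
  apply/(all_nthP 0) => i; rewrite size_takel // => hi.
  rewrite nth_take //; apply: (sorted_leq_nth le_trans lexx) => //.
  by rewrite inE (leq_trans hi ks).
by move=> /esym /eqP ->; rewrite size_takel.
Qed.

Lemma nth_le_of_count (s : seq R) k u : sorted <=%R s -> (k < size s)%N ->
  (k.+1 <= count (fun x : R => (x <= u)%R) s)%N -> s`_k <= u.
Proof.
move=> ss ks cnt; rewrite leNgt; apply/negP => uk; move: cnt; apply/negP; rewrite -ltnNge.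
set t := s`_k in uk *; rewrite -(cat_take_drop k s) count_cat.
have -> : count (fun x : R => (x <= u)%R) (drop k s) = 0%N.
  apply/eqP; rewrite -leqn0 leqNgt -has_count; apply/hasPn => x /(nthP 0) [i hi <-].
  rewrite nth_drop -ltNge; apply: (lt_le_trans uk).
  rewrite size_drop in hi.
  apply: (sorted_leq_nth le_trans lexx) => //; rewrite ?inE ?leq_addr //.
  by rewrite -ltn_subRL.
rewrite addn0 ltnS; apply: leq_trans (count_size _ _) _.
by rewrite size_take; case: ifP => // /negbT; rewrite -leqNgt.
Qed.
End S.

Section S.
Variable R : realType.
Local Notation C := (R[i]).
Local Notation toC := (real_complex R).
Local Notation Re := (@complex.Re R).
Local Open Scope sesquilinear_scope.

Lemma rowsub_supp n m (P : 'M[C]_n) (f : 'I_m -> 'I_n) (x : 'rV[C]_n) k :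
  P \is unitarymx -> (x <= rowsub f P)%MS -> (forall i, f i != k) ->
  (x *m P ^t*) 0 k = 0.
Proof.
move=> Pu /submxP [y ->] fk; rewrite -mulmxA mxE big1 // => i _.
have -> : (rowsub f P *m P ^t*) i k = (P *m P ^t*) (f i) k.
  by rewrite !mxE; apply: eq_bigr => l _; rewrite !mxE.
by rewrite (unitarymxP Pu) mxE (negbTE (fk i)) mulr0.
Qed.

Lemma rank_rowsub n m (P : 'M[C]_n) (f : 'I_m -> 'I_n) :
  P \is unitarymx -> injective f -> \rank (rowsub f P) = m.
Proof.
move=> /row_unitarymxP Pr finj; apply: mxrank_unitary; apply/row_unitarymxP => i j.
by rewrite !row_rowsub Pr (inj_eq finj).
Qed.

Lemma unitary_eq0 n (P : 'M[C]_n) (x : 'rV[C]_n) : P \is unitarymx ->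
  x *m P ^t* = 0 -> x = 0.
Proof.
by move=> Pu E; rewrite -[x]mulmx1 -(unitary_tl Pu) mulmxA E mul0mx.
Qed.

Lemma nrm2_eq0 n (x : 'rV[C]_n) : nrm2 x = 0 -> x = 0.
Proof.
move=> /psumr_eq0P H; apply/rowP => i; rewrite mxE.
by apply/eqP; rewrite -nrm_eq0 H // => k _; exact: nrm_ge0.
Qed.

Lemma weyl_count n (A B PA PB : 'M[C]_n) (a b : 'rV[R]_n) (c t : R) :
  diagz A PA a -> diagz B PB b ->
  (forall x, qf A x - c * nrm2 x <= qf B x) ->
  leq #|[set i | b 0 i <= t]| #|[set i | a 0 i <= t + c]|.
Proof.
move=> dA dB H; rewrite leqNgt; apply/negP => Hlt.
set SB := [set i | b 0 i <= t]; set SA := [set i | a 0 i <= t + c] in Hlt.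
set SA' := ~: SA.
pose U := rowsub (@enum_val _ (mem SB)) PB.
pose V := rowsub (@enum_val _ (mem SA')) PA.
have rU : \rank U = #|SB| by apply: rank_rowsub; [case: dB | exact: enum_val_inj].
have rV : \rank V = #|SA'| by apply: rank_rowsub; [case: dA | exact: enum_val_inj].
have cardA' : #|SA'| = (n - #|SA|)%N.
  by rewrite /SA' cardsCs setCK card_ord.
have nz : (U :&: V)%MS != 0.
  rewrite -mxrank_eq0; have h1 := mxrank_sum_cap U V.
  have h2 := rank_leq_col (U + V)%MS; have h3 := max_card (mem SA).
  rewrite card_ord in h3; rewrite -/SB in Hlt; move: h1 h2 h3 Hlt rU rV cardA'. lia.
set x := nz_row (U :&: V)%MS.
have xnz : x != 0 by rewrite nz_row_eq0.
have := nz_row_sub (U :&: V)%MS; rewrite -/x sub_capmx => /andP [xU xV].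
case: dA => PAu EA; case: dB => PBu EB.
have zB k : k \notin SB -> (x *m PB ^t*) 0 k = 0.
  move=> kS; apply: (rowsub_supp PBu xU) => i; apply: contraNneq kS => <-.
  exact: enum_valP.
have zA k : k \in SA -> (x *m PA ^t*) 0 k = 0.
  move=> kS; apply: (rowsub_supp PAu xV) => i; apply: contraTneq kS => <-.
  by have := enum_valP i; rewrite inE.
have qB : qf B x <= t * nrm2 x.
  rewrite (qf_diagz _ (conj PBu EB)) -(nrm2_unitary x PBu) /nrm2 mulr_sumr.
  apply: ler_sum => k _; case: (boolP (k \in SB)) => kS.
    by rewrite ler_wpM2r ?nrm_ge0 //; move: kS; rewrite inE.
  by rewrite zB // /nrm mul0r /= !mulr0.
have hge : forall k, true -> 0 <= (a 0 k - (t + c)) * nrm ((x *m PA ^t*) 0 k).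
  move=> k _; case: (boolP (k \in SA)) => kS.
    by rewrite zA // /nrm mul0r /= !mulr0.
  rewrite mulr_ge0 ?nrm_ge0 // subr_ge0; move: kS; rewrite inE -ltNge; exact: ltW.
have qA : \sum_k (a 0 k - (t + c)) * nrm ((x *m PA ^t*) 0 k) = 0.
  apply/eqP; rewrite eq_le; apply/andP; split; last first.
    by apply: sumr_ge0 => k _; apply: hge.
  under eq_bigr do rewrite mulrBl.
  rewrite sumrB -mulr_sumr.
  have := H x; rewrite (qf_diagz _ (conj PAu EA)) -(nrm2_unitary x PAu).
  move: qB; rewrite -(nrm2_unitary x PAu) /nrm2; lra.
have : x *m PA ^t* = 0.
  apply/rowP => k; rewrite [RHS]mxE; case: (boolP (k \in SA)) => kS; first exact: zA.
  apply/eqP; rewrite -nrm_eq0.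
  have := psumr_eq0P hge qA (i:=k) isT; move/eqP; rewrite mulf_eq0 => /orP [|//].
  by rewrite subr_eq0 => /eqP E; move: kS; rewrite inE E lexx.
by move/(unitary_eq0 PAu) => x0; move: xnz; rewrite x0 eqxx.
Qed.
End S.

Section S.
Variable R : realType.
Local Notation C := (R[i]).
Local Notation toC := (real_complex R).
Local Notation Re := (@complex.Re R).
Local Open Scope sesquilinear_scope.

Lemma weyl_svals n (A B PA PB : 'M[C]_n) (a b : 'rV[R]_n) (c : R) k :
  diagz A PA a -> diagz B PB b ->
  (forall x, qf A x - c * nrm2 x <= qf B x) -> (k < n)%N ->
  (svals a)`_k <= (svals b)`_k + c.
Proof.
move=> dA dB H kn; set t := (svals b)`_k.
apply: nth_le_of_count; rewrite ?sorted_svals ?size_svals //.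
rewrite count_svals; apply: (leq_trans _ (weyl_count t dA dB H)).
have := count_nth_ge (sorted_svals b) (k:=k); rewrite size_svals => /(_ kn).
by rewrite count_svals.
Qed.

Lemma nrm0 : nrm (0 : C) = 0. Proof. by rewrite /nrm /=; ring. Qed.
Lemma nrm1 : nrm (1 : C) = 1. Proof. by rewrite /nrm /=; ring. Qed.

Lemma qf_row n (A P : 'M[C]_n) d i : diagz A P d ->
  qf A (row i P) = d 0 i /\ nrm2 (row i P) = 1.
Proof.
move=> dA; have Pu := dA.1.
have z : row i P *m P ^t* = row i 1%:M by rewrite -row_mul (unitarymxP Pu).
rewrite (qf_diagz _ dA) -(nrm2_unitary _ Pu) z /nrm2; split.
  rewrite (bigD1 i) //= big1 ?addr0.
    by rewrite !mxE eqxx /= nrm1 mulr1.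
  by move=> k /negbTE ki; rewrite !mxE eq_sym ki /= nrm0 mulr0.
rewrite (bigD1 i) //= big1 ?addr0.
  by rewrite !mxE eqxx /= nrm1.
by move=> k /negbTE ki; rewrite !mxE eq_sym ki /= nrm0.
Qed.

Lemma qf_le n (A P : 'M[C]_n) d (M : R) x : diagz A P d ->
  (forall i, d 0 i <= M) -> qf A x <= M * nrm2 x.
Proof.
move=> dA dM; rewrite (qf_diagz _ dA) -(nrm2_unitary _ dA.1) /nrm2 mulr_sumr.
by apply: ler_sum => i _; rewrite ler_wpM2r ?nrm_ge0.
Qed.

Lemma qf_ge n (A P : 'M[C]_n) d (m : R) x : diagz A P d ->
  (forall i, m <= d 0 i) -> m * nrm2 x <= qf A x.
Proof.
move=> dA dM; rewrite (qf_diagz _ dA) -(nrm2_unitary _ dA.1) /nrm2 mulr_sumr.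
by apply: ler_sum => i _; rewrite ler_wpM2r ?nrm_ge0.
Qed.

Lemma qf_abs n (A P : 'M[C]_n) d x : diagz A P d ->
  `|qf A x| <= (\sum_i `|d 0 i|) * nrm2 x.
Proof.
move=> dA; rewrite (qf_diagz _ dA) -(nrm2_unitary _ dA.1).
apply: le_trans (ler_norm_sum _ _ _) _; rewrite mulr_suml.
apply: ler_sum => i _; rewrite normrM (ger0_norm (nrm_ge0 _)) ler_wpM2l //.
rewrite /nrm2 (bigD1 i) //= lerDl; apply: sumr_ge0 => k _; exact: nrm_ge0.
Qed.

Lemma svals_mem n (d : 'rV[R]_n) k : (k < n)%N -> exists i, (svals d)`_k = d 0 i.
Proof.
move=> kn; have : (svals d)`_k \in svals d by rewrite mem_nth ?size_svals.
by rewrite mem_sort => /mapP [i _ ->]; exists i.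
Qed.

Lemma qfD n (A B : 'M[C]_n) x : qf (A + B) x = qf A x + qf B x.
Proof. by rewrite /qf mulmxDr mulmxDl mxE raddfD. Qed.
Lemma qfN n (A : 'M[C]_n) x : qf (- A) x = - qf A x.
Proof. by rewrite /qf mulmxN mulNmx mxE raddfN. Qed.
Lemma qfZ n (A : 'M[C]_n) g x : qf (toC g *: A) x = g * qf A x.
Proof.
rewrite /qf -scalemxAr -scalemxAl mxE.
by case: ((x *m A *m x ^t*) 0 0) => p q /=; ring.
Qed.
Lemma qf_sum n (I : finType) (P : pred I) (F : I -> 'M[C]_n) x :
  qf (\sum_(i | P i) F i) x = \sum_(i | P i) qf (F i) x.
Proof.
elim/big_rec2: _ => [|i y M _ <-]; first by rewrite /qf mulmx0 mul0mx mxE.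
by rewrite qfD.
Qed.
Lemma qf_delta n (w : 'I_n) (x : 'rV[C]_n) : qf (delta_mx w w) x = nrm (x 0 w).
Proof.
rewrite /qf !mxE (bigD1 w) //= big1 ?addr0; last first.
  by move=> k /negbTE kw; rewrite !mxE; rewrite big1 ?mul0r // => l _; rewrite !mxE kw andbF mulr0.
rewrite !mxE (bigD1 w) //= big1 ?addr0; last first.
  by move=> k /negbTE kw; rewrite !mxE kw mulr0.
by rewrite !mxE !eqxx mulr1.
Qed.
Lemma qf1 n (x : 'rV[C]_n) : qf (1%:M : 'M[C]_n) x = nrm2 x.
Proof. by rewrite /qf mulmx1 nrm2E. Qed.
End S.

Section S.
Variable R : realType.
Local Notation C := (R[i]).
Local Notation toC := (real_complex R).
Local Notation Re := (@complex.Re R).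
Local Open Scope sesquilinear_scope.

Lemma eig_row n (A P : 'M[C]_n) d i : diagz A P d ->
  row i P *m A = toC (d 0 i) *: row i P.
Proof.
move=> [Pu ->]; rewrite !mulmxA -row_mul (unitarymxP Pu) -row_mul mul1mx.
by rewrite row_diag_mx -scalemxAl -rowE mxE.
Qed.

Lemma maxim_eig n (A P : 'M[C]_n) d (M : R) x : diagz A P d ->
  (forall i, d 0 i <= M) -> qf A x = M * nrm2 x -> x *m A = toC M *: x.
Proof.
move=> dA dM q; have Pu := dA.1; set z := x *m P ^t*.
have hge : forall i, true -> 0 <= (M - d 0 i) * nrm (z 0 i).
  by move=> i _; rewrite mulr_ge0 ?nrm_ge0 // subr_ge0.
have hs : \sum_i (M - d 0 i) * nrm (z 0 i) = 0.
  under eq_bigr do rewrite mulrBl.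
  rewrite sumrB -mulr_sumr -/(nrm2 z) nrm2_unitary // -(qf_diagz _ dA) q; ring.
have xz : x = z *m P by rewrite /z -mulmxA unitary_tl // mulmx1.
clearbody z.
have zD : z *m diag_mx (map_mx toC d) = toC M *: z.
  apply/rowP => i; rewrite mul_mx_diag !mxE.
  have := psumr_eq0P hge hs (i:=i) isT; move/eqP; rewrite mulf_eq0 => /orP [].
    by rewrite subr_eq0 => /eqP ->; rewrite mulrC.
  move=> h; have h2 : z 0 i == 0 by rewrite -nrm_eq0.
  by rewrite (eqP h2) !mul0r mulr0.
have xz' : x *m P ^t* = z by rewrite xz -mulmxA (unitarymxP Pu) mulmx1.
by case: dA => _ ->; rewrite !mulmxA xz' zD -scalemxAl -xz.
Qed.

Lemma nrm_norm (z : C) : nrm `|z| = nrm z.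
Proof. by rewrite /nrm -!normCK normr_id. Qed.

Lemma Re_le_norm (z : C) : toC (Re z) <= `|z|.
Proof.
case: z => p q; rewrite normc_def /= lecR.
apply: le_trans (ler_norm p) _; rewrite -sqrtr_sqr ler_wsqrtr //.
by rewrite lerDl sqr_ge0.
Qed.

Lemma qf_expand n (A : 'M[C]_n) x :
  qf A x = Re (\sum_k (\sum_l x 0 l * A l k) * conjC (x 0 k)).
Proof.
rewrite /qf mxE; congr Re; apply: eq_bigr => k _; rewrite !mxE.
by congr (_ * _); apply: eq_bigr => l _; rewrite mxE.
Qed.

Lemma perron n (adj : rel 'I_n) P e (phi : R) (v : 'rV[C]_n) :
  symmetric adj -> (forall x y, connect adj x y) ->
  diagz (toCmx (adjmx R adj)) P e -> (forall i, e 0 i <= phi) ->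
  v *m toCmx (adjmx R adj) = toC phi *: v -> v != 0 -> forall k, v 0 k != 0.
Proof.
move=> asym acon dA ephi ev vnz.
set A := toCmx (adjmx R adj) in dA ev *.
have Ae l k : A l k = (adj l k)%:R by rewrite !mxE rmorph_nat.
pose a := \row_k (`|v 0 k| : C).
have qv : qf A v = phi * nrm2 v.
  rewrite /qf ev -scalemxAl mxE nrm2E.
  by case: ((v *m v ^t*) 0 0) => p q /=; ring.
have na : nrm2 a = nrm2 v by apply: eq_bigr => k _; rewrite mxE nrm_norm.
have qva : qf A v <= qf A a.
  rewrite !qf_expand.
  set Sv := \sum_k _; set Sa := \sum_k _.
  have : toC (Re Sv) <= Sa.
    apply: (Order.PreorderTheory.le_trans (Re_le_norm _)). apply: (Order.PreorderTheory.le_trans (ler_norm_sum _ _ _)).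
    apply: ler_sum => k _; rewrite !mulr_suml.
    apply: (Order.PreorderTheory.le_trans (ler_norm_sum _ _ _)); apply: ler_sum => l _.
    rewrite Ae !mxE !normrM norm_conjC (ger0_norm (ler0n _ _)).
    by rewrite (geC0_conj (normr_ge0 _)).
  by rewrite lecE /= => /andP [_].
have qa : qf A a = phi * nrm2 a.
  apply/eqP; rewrite eq_le (qf_le _ dA ephi) /=.
  by rewrite na -qv.
have aeig := maxim_eig dA ephi qa.
have Z l k : adj l k -> v 0 k = 0 -> v 0 l = 0.
  move=> alk vk0.
  have s0 : (a *m A) 0 k = 0 by rewrite aeig !mxE vk0 normr0 mulr0.
  rewrite mxE in s0.
  have hge : forall l, true -> 0 <= a 0 l * A l k.
    by move=> l' _; rewrite Ae mxE mulr_ge0 ?normr_ge0 ?ler0n.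
  have := psumr_eq0P hge s0 (i:=l) isT.
  by rewrite Ae alk mxE mulr1 => /normr0_eq0.
have cl : closed adj [pred k | v 0 k == 0].
  move=> x y axy; rewrite !inE; apply/eqP/eqP => h.
    by apply: (Z y x) => //; rewrite asym.
  exact: (Z x y).
move=> k; apply/eqP => vk; move/negP: vnz; apply; apply/eqP/rowP => l.
rewrite [RHS]mxE; have := closed_connect cl (acon k l).
by rewrite !inE vk eqxx => /esym/eqP.
Qed.

Lemma simple_top n (adj : rel 'I_n) P e (phi : R) :
  symmetric adj -> (forall x y, connect adj x y) ->
  diagz (toCmx (adjmx R adj)) P e -> (forall i, e 0 i <= phi) ->
  leq #|[set i | e 0 i == phi]| 1.
Proof.
move=> asym acon dA ephi; rewrite leqNgt; apply/negP => /card_gt1P [i [k [Hi Hk ik]]].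
move: Hi Hk; rewrite !inE => /eqP ei /eqP ek.
set A := toCmx (adjmx R adj) in dA *.
have Pu := dA.1.
set u := row i P; set w := row k P.
have eu : u *m A = toC phi *: u by rewrite (eig_row _ dA) ei.
have ew : w *m A = toC phi *: w by rewrite (eig_row _ dA) ek.
have unz : u != 0.
  apply/negP => /eqP u0; have [_] := qf_row i dA; rewrite -/u u0.
  have -> : nrm2 (0 : 'rV[C]_n) = 0 by rewrite /nrm2 big1 // => j _; rewrite mxE nrm0.
  by move/eqP; rewrite eq_sym oner_eq0.
have ui := perron asym acon dA ephi eu unz i.
set v := w 0 i *: u - u 0 i *: w.
have ev : v *m A = toC phi *: v.
  rewrite /v mulmxBl -!scalemxAl eu ew !scalerA scalerBr !scalerA.
  by rewrite (mulrC (w 0 i)) (mulrC (u 0 i)).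
have v0 : v = 0.
  apply/eqP; apply/negP => /negP vnz; have := perron asym acon dA ephi ev vnz i.
  by rewrite /v !mxE mulrC subrr eqxx.
have : (v *m P ^t*) 0 k = 0 by rewrite v0 mul0mx mxE.
rewrite /v mulmxBl -!scalemxAl /u /w -!row_mul (unitarymxP Pu) !mxE eqxx.
case: eqP => [ik'|_]; first by rewrite ik' eqxx in ik.
rewrite mulr0 sub0r mulr1 => /eqP; rewrite oppr_eq0.
by move: ui; rewrite /u mxE => /negbTE ->.
Qed.
End S.

Section S.
Variable R : realType.
Local Notation C := (R[i]).
Local Notation toC := (real_complex R).
Local Notation Re := (@complex.Re R).
Local Open Scope sesquilinear_scope.

Lemma conj_affine n (P D : 'M[C]_n) (c : C) : P ^t* *m P = 1%:M ->
  P ^t* *m (- (c *: D) - 1%:M) *m P = - (c *: (P ^t* *m D *m P)) - 1%:M.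
Proof.
move=> PP; rewrite mulmxBr mulmxBl mulmxN mulNmx -scalemxAr -scalemxAl.
by rewrite mulmx1 PP.
Qed.

Lemma diagz_affine n (A P : 'M[C]_n) (e : 'rV[R]_n) (g : R) : diagz A P e ->
  diagz (- (toC g *: A) - 1%:M) P (\row_i (- (g * e 0 i) - 1)).
Proof.
case=> Pu EA; split; first exact: Pu.
have E : diag_mx (map_mx toC (\row_i (- (g * e 0 i) - 1))) =
    - (toC g *: diag_mx (map_mx toC e)) - 1%:M.
  apply/matrixP => i k; rewrite !mxE; case: eqP => _ /=.
    by rewrite !mulr1n rmorphB rmorphN rmorphM rmorph1.
  by rewrite !mulr0n mulr0 oppr0 addr0.
rewrite E conj_affine; [by rewrite EA | exact: unitary_tl].
Qed.

Variables (N : nat) (adj : rel 'I_N) (W : {set 'I_N}) (phi0 : R).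
Hypothesis asym : symmetric adj.
Hypothesis airr : irreflexive adj.
Hypothesis acon : forall x y, connect adj x y.
Hypothesis hphi : largest_eigenvalue (adjmx R adj) phi0.
Hypothesis Wn0 : W != set0.

Let Adj := adjmx R adj.
Lemma AdjT : Adj^T = Adj.
Proof. by apply/matrixP => i k; rewrite !mxE asym. Qed.
Let H (g : R) := Hmx adj W g.
Lemma HT g : (H g)^T = H g.
Proof.
rewrite /H /Hmx linearD linearN linearZ /= AdjT linearN linear_sum /=.
by congr (_ - _); apply: eq_bigr => w _; rewrite trmx_delta.
Qed.

Let eA := specd Adj.
Let PA := specP Adj.
Let dA : diagz (toCmx Adj) PA eA := diagz_spec AdjT.
Let dH g := specd (H g).
Let dHz g : diagz (toCmx (H g)) (specP (H g)) (dH g) := diagz_spec (HT g).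
Definition lam g k := (svals (dH g))`_k.

Lemma toCmx_H g : toCmx (H g) =
  - (toC g *: toCmx Adj) - \sum_(w in W) delta_mx w w.
Proof.
apply/matrixP => i k; rewrite !mxE !summxE rmorphB rmorphN rmorphM /=.
rewrite rmorph_sum; congr (- _ - _).
by apply: eq_bigr => w _; rewrite !mxE rmorph_nat.
Qed.

Lemma qfH g x : qf (toCmx (H g)) x =
  - (g * qf (toCmx Adj) x) - \sum_(w in W) nrm (x 0 w).
Proof.
rewrite toCmx_H qfD qfN qfZ qfN qf_sum; congr (_ - _).
by apply: eq_bigr => w _; rewrite qf_delta.
Qed.

Definition Kc := \sum_i `|eA 0 i|.
Lemma Kc_ge0 : 0 <= Kc.
Proof. by apply: sumr_ge0 => i _; exact: normr_ge0. Qed.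

Lemma lam_lip g g' k : (k < N)%N -> lam g k <= lam g' k + `|g' - g| * Kc.
Proof.
move=> kN; apply: weyl_svals (dHz g) (dHz g') _ kN => x.
rewrite !qfH; have := qf_abs x dA; rewrite -/Kc => hq.
set q := qf _ x; set s := \sum_(w in W) _.
have : (g' - g) * q <= `|g' - g| * Kc * nrm2 x.
  apply: le_trans (ler_norm _) _; rewrite normrM -mulrA ler_wpM2l //.
rewrite mulrBl; lra.
Qed.

Lemma lam_cont g g' k : (k < N)%N -> `|lam g k - lam g' k| <= Kc * `|g - g'|.
Proof.
move=> kN; have h1 := lam_lip g g' kN; have h2 := lam_lip g' g kN.
rewrite distrC in h1; rewrite ler_norml; apply/andP; split; rewrite mulrC; lra.
Qed.

Lemma eA_le i : eA 0 i <= phi0.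
Proof.
apply: hphi.2; rewrite eigenvalue_root_char (char_poly_diagz dA) -prod_svals.
by rewrite root_prod_XsubC mem_sort map_f // mem_enum.
Qed.

Lemma qf_rowe n (A : 'M[C]_n) (w : 'I_n) : qf A (row w 1%:M) = Re (A w w).
Proof.
have E : (row w (1%:M : 'M[C]_n)) ^t* = delta_mx w 0.
  by apply/matrixP => i j; rewrite !mxE ord1 eqxx andbT rmorph_nat eq_sym.
by rewrite /qf E -row_mul mul1mx -colE !mxE.
Qed.

Lemma nrm2_rowe n (w : 'I_n) : nrm2 (row w (1%:M : 'M[C]_n)) = 1.
Proof. by rewrite -qf1 qf_rowe mxE eqxx. Qed.

Lemma svals_min n (d : 'rV[R]_n) i : (svals d)`_0 <= d 0 i.
Proof.
have : d 0 i \in svals d by rewrite mem_sort map_f // mem_enum.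
move=> /(nthP 0) [m hm <-].
apply: (sorted_leq_nth le_trans lexx) => //; first exact: sorted_svals.
by rewrite inE (leq_ltn_trans _ hm).
Qed.

Lemma subsum_le (x : 'rV[C]_N) : \sum_(w in W) nrm (x 0 w) <= nrm2 x.
Proof.
rewrite /nrm2 [X in _ <= X](bigID (fun i => i \in W)) /= lerDl.
by apply: sumr_ge0 => i _; exact: nrm_ge0.
Qed.

Lemma subsum_ge0 (x : 'rV[C]_N) : 0 <= \sum_(w in W) nrm (x 0 w).
Proof. by apply: sumr_ge0 => i _; exact: nrm_ge0. Qed.

Lemma lam0_le g : (0 < N)%N -> lam g 0 <= -1.
Proof.
move=> N0; have [w wW] := set0Pn _ Wn0.
set x := row w (1%:M : 'M[C]_N).
have q : qf (toCmx (H g)) x = -1.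
  rewrite qfH qf_rowe !mxE (airr w) /= mulr0 oppr0 sub0r.
  congr (- _); rewrite (bigD1 w) //= big1 ?addr0.
    by rewrite !mxE eqxx nrm1.
  by move=> k /andP [_ /negbTE kw]; rewrite !mxE eq_sym kw nrm0.
have := qf_ge x (dHz g) (m := lam g 0) (fun i => svals_min _ i).
by rewrite q nrm2_rowe mulr1.
Qed.

Lemma lam_le_top g k : 0 <= g -> (k < N)%N -> lam g k <= g * Kc.
Proof.
move=> g0 kN; rewrite /lam; have [i ->] := svals_mem (dH g) kN.
have [q n1] := qf_row i (dHz g); rewrite -q qfH.
have := qf_abs (row i (specP (H g))) dA; rewrite n1 mulr1 -/Kc => hq.
have := subsum_ge0 (row i (specP (H g))).
set s := \sum_(w in W) _; set a := qf _ _.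
have : - (g * a) <= g * Kc.
  rewrite -mulrN ler_wpM2l //; apply: le_trans hq; rewrite -normrN; exact: ler_norm.
lra.
Qed.

Lemma lam0_ge g : 0 <= g -> (0 < N)%N -> - (g * phi0) - 1 <= lam g 0.
Proof.
move=> g0 N0; rewrite /lam; have [i ->] := svals_mem (dH g) N0.
have [q n1] := qf_row i (dHz g); rewrite -q qfH.
have := qf_le (row i (specP (H g))) dA eA_le; rewrite n1 mulr1 => hq.
have := subsum_le (row i (specP (H g))); rewrite n1.
set s := \sum_(w in W) _; set a := qf _ _.
have : g * a <= g * phi0 by rewrite ler_wpM2l.
lra.
Qed.

Definition phi1 := \big[Order.max/(phi0 - 1)]_(i | eA 0 i != phi0) eA 0 i.

Lemma phi1_lt : phi1 < phi0.
Proof.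
apply: bigmax_lt; first lra.
by move=> i ne; rewrite lt_neqAle ne eA_le.
Qed.

Lemma e_le_phi1 i : eA 0 i != phi0 -> eA 0 i <= phi1.
Proof. by move=> ne; apply: le_bigmax_cond. Qed.

Lemma lam1_ge g : 0 <= g -> (1 < N)%N -> - (g * phi1) - 1 <= lam g 1.
Proof.
move=> g0 N1.
pose a : 'rV[R]_N := \row_i (- (g * eA 0 i) - 1).
pose Am := - (toC g *: toCmx Adj) - 1%:M.
have dAm : diagz Am PA a.
  exact: diagz_affine.
have := weyl_svals (c := 0) (k := 1) dAm (dHz g).
rewrite addr0 => /(_ _ N1) h.
have {h}h : (svals a)`_1 <= lam g 1.
  apply: h => x; rewrite mul0r subr0 /Am qfH qfD qfN qfZ qfN qf1.
  have := subsum_le x; set s := \sum_(w in W) _; lra.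
apply: le_trans h; rewrite leNgt; apply/negP => hlt.
have c2 := count_nth_ge (sorted_svals a) (k:=1); rewrite size_svals in c2.
have {c2}c2 := c2 N1; rewrite count_svals in c2.
have sub : [set i | a 0 i <= (svals a)`_1] \subset [set i | eA 0 i == phi0].
  apply/subsetP => i; rewrite !inE mxE => hi; apply/negPn/negP => ne.
  have := e_le_phi1 ne => he.
  have : g * eA 0 i <= g * phi1 by rewrite ler_wpM2l.
  lra.
have := subset_leq_card sub; have := simple_top asym acon dA eA_le.
move: c2; set u := #|_|; set v := #|_|; lia.
Qed.

Variable j : nat.
Hypothesis N2 : (2 <= N)%N.
Hypothesis hj : (2 <= j <= N)%N.

Definition fl g := (lam g 0 + lam g j.-1) / 2 + g * phi0.

Lemma fl_lip g g' : `|fl g - fl g'| <= (Kc + `|phi0|) * `|g - g'|.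
Proof.
have N0 : (0 < N)%N by lia.
have jN : (j.-1 < N)%N by lia.
have := lam_cont g g' N0; have := lam_cont g g' jN.
rewrite /fl !ler_norml => /andP [a1 a2] /andP [b1 b2].
have : `|(g - g') * phi0| <= `|phi0| * `|g - g'| by rewrite normrM mulrC.
rewrite ler_norml mulrBl => /andP [c1 c2].
have := normr_ge0 (g - g'); set d := `|g - g'| in a1 a2 b1 b2 c1 c2 * => d0.
rewrite mulrDl; apply/andP; split; lra.
Qed.

Lemma main_sec : exists g : R, 0 < g /\
    exists s : seq R, sorted_spectrum (Hmx adj W g) s /\
      - (g * phi0) = (s`_0 + s`_j.-1) / 2.
Proof.
have N0 : (0 < N)%N by lia.
have N1 : (1 < N)%N by lia.
have jN : (j.-1 < N)%N by lia.
have j1 : (1 <= j.-1)%N by lia.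
set g1 := 1 / (Kc + 2 * `|phi0| + 1).
have Kp : 0 < Kc + 2 * `|phi0| + 1.
  have := Kc_ge0; have := normr_ge0 phi0; lra.
have g1p : 0 < g1 by rewrite divr_gt0.
have g1e : g1 * Kc + 2 * (g1 * `|phi0|) + g1 = 1.
  have g1e' : g1 * (Kc + 2 * `|phi0| + 1) = 1 by rewrite /g1 mul1r mulVf ?gt_eqF.
  by rewrite -[RHS]g1e' !mulrDr mulr1 mulrCA.
have dp : 0 < phi0 - phi1 by have := phi1_lt; lra.
set g2 := g1 + 4 / (phi0 - phi1).
have g12 : g1 <= g2 by rewrite lerDl divr_ge0 // ltW.
have f1 : fl g1 <= 0.
  have := lam0_le g1 N0; have := lam_le_top (ltW g1p) jN.
  have : g1 * phi0 <= g1 * `|phi0| by rewrite ler_wpM2l ?ler_norm // ltW.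
  rewrite /fl; lra.
have f2 : 0 <= fl g2.
  have g2p : 0 <= g2 by apply: le_trans g12; exact: ltW.
  have := lam0_ge g2p N0; have := lam1_ge g2p N1.
  have : lam g2 1 <= lam g2 j.-1.
    apply: (sorted_leq_nth le_trans lexx) => //; first exact: sorted_svals.
    - by rewrite inE size_svals.
    - by rewrite inE size_svals.
  have : g2 * phi0 - g2 * phi1 = g1 * (phi0 - phi1) + 4.
    by rewrite -mulrBr /g2 mulrDl divfK ?gt_eqF.
  have : 0 <= g1 * (phi0 - phi1) by rewrite mulr_ge0 // ltW.
  rewrite /fl; lra.
have L0 : 0 <= Kc + `|phi0| by have := Kc_ge0; have := normr_ge0 phi0; lra.
have [c [/andP [c1 c2] fc0]] := Ana.ivt_lip L0 fl_lip g12 f1 f2.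
exists c; split; first exact: lt_le_trans c1.
exists (svals (dH c)); split.
  split; first exact: sorted_svals.
  by rewrite (char_poly_diagz (dHz c)) prod_svals.
by move: fc0; rewrite /fl /lam; lra.
Qed.
End S.

End Dev.

Theorem proposition4 (R : realType) (N : nat) (adj : rel 'I_N)
  (W : {set 'I_N}) (phi0 : R) (j : nat) :
  (2 <= N)%N ->
  simple_graph adj ->
  connected_graph adj ->
  largest_eigenvalue (adjmx R adj) phi0 ->
  W != set0 ->
  (2 <= j <= N)%N ->
  exists g : R, 0 < g /\
    exists s : seq R, sorted_spectrum (Hmx adj W g) s /\
      - (g * phi0) = (s`_0 + s`_j.-1) / 2.
Proof.
move=> N2 [asym airr] acon hphi Wn0 hj.
exact: (Dev.main_sec asym airr acon hphi Wn0 N2 hj).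
Qed.
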